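(* Let $M,N\ge1$, $\mathbf y\in\mathbb{R}^M$, $\mathbf H\in\mathbb{R}^{M\times N}$ with $R=\operatorname{rank}(\mathbf H)\ge1$, and $\sigma_e^2>0$, $\sigma_\epsilon^2>0$. Let $\mathbf H=\mathbf U\boldsymbol\Sigma\mathbf V^{\mathrm T}$ be a singular value decomposition with nonzero singular values $\lambda_1\ge\cdots\ge\lambda_R>0$, and $\widetilde{\mathbf y}=\mathbf U^{\mathrm T}\mathbf y$. Consider the negative log-likelihood $$f(\mathbf x)=\frac{\|\mathbf y-\mathbf H\mathbf x\|_2^2}{2(\sigma_e^2\|\mathbf x\|_2^2+\sigma_\epsilon^2)}+\frac M2\log(\sigma_e^2\|\mathbf x\|_2^2+\sigma_\epsilon^2),\qquad \mathbf x\in\mathbb{R}^N,$$ and the optimization problem (P): minimize over $\mathbf w=(w_1,\dots,w_N)\in\mathbb{R}^N$ and $z>0$ $$\Phi(\mathbf w,z)=\sum_{j=1}^R\frac12\Big(\widetilde y_j^2 z+\lambda_j^2w_j-2|\widetilde y_j|\lambda_j\sqrt{w_jz}\Big)+\frac12\|\widetilde{\mathbf y}_{R+1:M}\|_2^2\,z-\frac M2\log z$$ subject to $\sigma_e^2\sum_{i=1}^N w_i+\sigma_\epsilon^2 z=1$ and $w_i\ge0$ for $i=1,\dots,N$. Then: (i) $\Phi$ is a convex function on $\{(\mathbf w,z):\mathbf w\ge\mathbf 0,\ z>0\}$, so (P) is a convex optimization problem; (ii) $\inf_{\mathbf x\in\mathbb{R}^N}f(\mathbf x)$ equals the optimal value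 of (P); (iii) strong duality holds for (P), i.e. the optimal value of (P) equals the optimal value of its Lagrangian dual problem (with multipliers for the equality constraint and the constraints $w_i\ge0$).
   Context: $\widetilde{\mathbf y}_{R+1:M}=(\widetilde y_{R+1},\dots,\widetilde y_M)^{\mathrm T}$; if $R=M$ it is empty and its squared norm is $0$. The function $f$ is, up to additive constants, the negative log-likelihood of $\mathbf x$ in the model $\mathbf y=(\mathbf H+\mathbf E)\mathbf x+\boldsymbol\epsilon$ with $\mathbf E$ having i.i.d. $\mathcal N(0,\sigma_e^2)$ entries and $\boldsymbol\epsilon\sim\mathcal N(\mathbf 0,\sigma_\epsilon^2\mathbf I_M)$ independent. *)

(* Defs.v *)
From HB Require Import structures.
From mathcomp Require Import all_boot all_order all_algebra.
From mathcomp Require Import all_classical all_reals.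
From mathcomp Require Import ereal exp.
Set Implicit Arguments. Unset Strict Implicit. Unset Printing Implicit Defensive.
Import Order.TTheory GRing.Theory Num.Theory.
Local Open Scope ring_scope.
Local Open Scope classical_set_scope.

Section Defs.
Variable R : realType.

Definition sqnorm n (v : 'cV[R]_n) : R := \sum_(i < n) v i 0 ^+ 2.

(* k-th entry (0-based, nat index) of a column vector; 0 if out of range *)
Definition ventry n (v : 'cV[R]_n) (k : nat) : R :=
  if insub k is Some i then v i 0 else 0.

Definition svd_Sigma M N (lam : nat -> R) (r : nat) : 'M[R]_(M, N) :=
  \matrix_(i < M, j < N) (if ((i : nat) == j) && (i < r)%N then lam i else 0).

Definition nll M N (y : 'cV[R]_M) (H : 'M[R]_(M, N)) (se2 sn2 : R)
  (x : 'cV[R]_N) : R :=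
  sqnorm (y - H *m x) / (2 * (se2 * sqnorm x + sn2))
  + (M%:R / 2) * ln (se2 * sqnorm x + sn2).

(* objective Phi of (P); ytil = U^T y, lam the nonzero singular values, r the rank *)
Definition Phi M N (ytil : 'cV[R]_M) (lam : nat -> R) (r : nat)
  (w : 'cV[R]_N) (z : R) : R :=
  \sum_(j < r) (1/2) * (ventry ytil j ^+ 2 * z + lam j ^+ 2 * ventry w j
        - 2 * `|ventry ytil j| * lam j * Num.sqrt (ventry w j * z))
  + (1/2) * (\sum_(i < M | (r <= i)%N) ytil i 0 ^+ 2) * z
  - (M%:R / 2) * ln z.

Definition domP N (w : 'cV[R]_N) (z : R) : Prop :=
  (forall i, 0 <= w i 0) /\ 0 < z.

Definition feasP N (se2 sn2 : R) (w : 'cV[R]_N) (z : R) : Prop :=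
  domP w z /\ se2 * (\sum_(i < N) w i 0) + sn2 * z = 1.

(* Lagrangian of (P): nu for the equality constraint, mu_i for -w_i <= 0 *)
Definition Lagr M N (ytil : 'cV[R]_M) (lam : nat -> R) (r : nat) (se2 sn2 : R)
  (w : 'cV[R]_N) (z : R) (nu : R) (mu : 'cV[R]_N) : R :=
  Phi ytil lam r w z + nu * (se2 * (\sum_(i < N) w i 0) + sn2 * z - 1)
  - \sum_(i < N) mu i 0 * w i 0.

Definition dualfun M N (ytil : 'cV[R]_M) (lam : nat -> R) (r : nat) (se2 sn2 : R)
  (nu : R) (mu : 'cV[R]_N) : \bar R :=
  ereal_inf [set e | exists (w : 'cV[R]_N) (z : R),
     domP w z /\ e = (Lagr ytil lam r se2 sn2 w z nu mu)%:E].

End Defs.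

(* Main.v *)
Require Import Defs.
From HB Require Import structures.
From mathcomp Require Import all_boot all_order all_algebra.
From mathcomp Require Import all_classical all_reals.
From mathcomp Require Import ereal exp.
From mathcomp Require Import ring lra.
Import Order.TTheory GRing.Theory Num.Theory.
Local Open Scope ring_scope.
Local Open Scope classical_set_scope.

Section Aux.
Variable R : realType.

Lemma sqrt_concave (w1 w2 z1 z2 t : R) : 0 <= w1 -> 0 <= w2 -> 0 <= z1 -> 0 <= z2 ->
  0 <= t <= 1 ->
  t * Num.sqrt (w1 * z1) + (1 - t) * Num.sqrt (w2 * z2) <=
  Num.sqrt ((t * w1 + (1 - t) * w2) * (t * z1 + (1 - t) * z2)).
Proof.
move=> hw1 hw2 hz1 hz2 /andP[t0 t1].
rewrite (sqrtrM z1 hw1) (sqrtrM z2 hw2).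
have := sqr_sqrtr hw1; have := sqr_sqrtr hw2; have := sqr_sqrtr hz1; have := sqr_sqrtr hz2.
set a := Num.sqrt w1; set b := Num.sqrt z1; set c := Num.sqrt w2; set d := Num.sqrt z2.
move=> Ed Eb Ec Ea.
have a0 : 0 <= a by apply: sqrtr_ge0.
have b0 : 0 <= b by apply: sqrtr_ge0.
have c0 : 0 <= c by apply: sqrtr_ge0.
have d0 : 0 <= d by apply: sqrtr_ge0.
have L0 : 0 <= t * (a * b) + (1 - t) * (c * d).
  by apply: addr_ge0; apply: mulr_ge0 => //; [apply: mulr_ge0|rewrite subr_ge0|apply: mulr_ge0].
rewrite -(ger0_norm L0) -sqrtr_sqr; apply: ler_wsqrtr.
rewrite -Ea -Eb -Ec -Ed.
have : 0 <= t * (1 - t) * (a * d - c * b) ^+ 2.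
  by apply: mulr_ge0; [apply: mulr_ge0 => //; rewrite subr_ge0|apply: sqr_ge0].
move=> H; rewrite -subr_ge0; apply: (le_trans H); rewrite le_eqVlt; apply/orP; left; apply/eqP; ring.
Qed.

Lemma ln_concave (a b t : R) : 0 < a -> 0 < b -> 0 <= t <= 1 ->
  t * ln a + (1 - t) * ln b <= ln (t * a + (1 - t) * b).
Proof.
move=> a0 b0 /andP[t0 t1].
set c := t * a + (1 - t) * b.
have c0 : 0 < c.
  rewrite /c; nra.
have key : forall x, 0 < x -> ln x - ln c <= x / c - 1.
  move=> x x0; rewrite -ln_div ?posrE //.
  have E : 1 + (x / c - 1) = x / c by ring.
  have := @le_ln1Dx R (x / c - 1); rewrite E; apply.
  have : 0 < x / c by rewrite divr_gt0.
  lra.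
have Ha := key a a0; have Hb := key b b0.
have E : t * (a / c - 1) + (1 - t) * (b / c - 1) = 0.
  have -> : t * (a / c - 1) + (1 - t) * (b / c - 1) = c * c^-1 - 1 by rewrite /c; ring.
  by rewrite mulfV ?subrr // gt_eqF.
have t1' : 0 <= 1 - t by rewrite subr_ge0.
have := ler_wpM2l t0 Ha; have := ler_wpM2l t1' Hb.
lra.
Qed.

End Aux.

Section Aux.
Variable R : realType.

Lemma slope_lemma (T : Type) (D : T -> Prop) (phi g : T -> R) (p : R) :
 (forall P1 P2 t, D P1 -> D P2 -> 0 <= t <= 1 -> exists P, D P /\
     g P = t * g P1 + (1 - t) * g P2 /\ phi P <= t * phi P1 + (1 - t) * phi P2) ->
 (forall P, D P -> g P = 1 -> p <= phi P) ->
 (exists P1, D P1 /\ g P1 < 1) -> (exists P2, D P2 /\ 1 < g P2) ->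
 exists nu, forall P, D P -> p <= phi P + nu * (g P - 1).
Proof.
move=> cvx feas [P1 [DP1 gP1]] [P2 [DP2 gP2]].
have key : forall Q1 Q, D Q1 -> D Q -> g Q1 < 1 -> 1 < g Q ->
    (p - phi Q1) / (1 - g Q1) <= (phi Q - p) / (g Q - 1).
  move=> Q1 Q DQ1 DQ gQ1 gQ.
  set u1 := g Q1 - 1; set u := g Q - 1.
  have u1n : u1 < 0 by rewrite /u1 subr_lt0.
  have up : 0 < u by rewrite /u subr_gt0.
  set d := u - u1.
  have dp : 0 < d by rewrite /d; lra.
  set t := u / d.
  have td : t * d = u by rewrite /t mulrVK // unitfE gt_eqF.
  have t01 : 0 <= t <= 1.
    apply/andP; split; first by rewrite /t divr_ge0 // ltW.
    by rewrite /t ler_pdivrMr // mul1r /d; lra.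
  have [P0 [DP0 [gP0 phiP0]]] := cvx Q1 Q t DQ1 DQ t01.
  have g1 : g P0 = 1.
    rewrite gP0; have : g Q1 = u1 + 1 by rewrite /u1; ring.
    have : g Q = u + 1 by rewrite /u; ring.
    move=> -> ->.
    have : (1 - t) * d = - u1 by rewrite mulrBl mul1r td /d; ring.
    move=> E2.
    have : (t * (u1 + 1) + (1 - t) * (u + 1)) * d = d.
      have -> : (t * (u1 + 1) + (1 - t) * (u + 1)) * d = (t * d) * u1 + ((1 - t) * d) * u + (t * d + (1 - t) * d) by ring.
      rewrite td E2 /d; ring.
    move=> E3; apply: (mulIf (negbT (gt_eqF dp))); by rewrite E3 mul1r.
  have hp := feas P0 DP0 g1.
  have E2 : (1 - t) * d = - u1 by rewrite mulrBl mul1r td /d; ring.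
  have H1 : p * d <= u * phi Q1 - u1 * phi Q.
    have := ler_wpM2r (ltW dp) (le_trans hp phiP0).
    have -> : (t * phi Q1 + (1 - t) * phi Q) * d = (t * d) * phi Q1 + ((1 - t) * d) * phi Q by ring.
    by rewrite td E2; lra.
  have -> : 1 - g Q1 = - u1 by rewrite /u1; ring.
  rewrite -/u ler_pdivrMr ?oppr_gt0 //.
  rewrite mulrAC ler_pdivlMr //.
  rewrite /d in H1; nra.
pose A := [set a | exists Q0, D Q0 /\ g Q0 < 1 /\ a = (p - phi Q0) / (1 - g Q0)].
have A0 : A !=set0 by exists ((p - phi P1) / (1 - g P1)); exists P1.
have Aub : forall Q, D Q -> 1 < g Q -> ubound A ((phi Q - p) / (g Q - 1)).
  move=> X DX gX a; case=> Y [DY [gY ->]]; exact: key.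
have hs : has_sup A by split => //; exists ((phi P2 - p) / (g P2 - 1)); apply: Aub.
exists (- sup A) => P DP.
case: (ltgtP (g P) 1) => gP.
- have : (p - phi P) / (1 - g P) <= sup A.
    by apply: sup_upper_bound => //; exists P.
  rewrite ler_pdivrMr ?subr_gt0 //; nra.
- have : sup A <= (phi P - p) / (g P - 1) by apply: ge_sup => //; apply: Aub.
  rewrite ler_pdivlMr ?subr_gt0 //; nra.
- by rewrite gP subrr mulr0 addr0; apply: feas.
Qed.

End Aux.

Section Aux.
Variable R : realType.

Lemma sqnormE n (v : 'cV[R]_n) : sqnorm v = (v^T *m v) 0 0.
Proof. by rewrite /sqnorm mxE; apply: eq_bigr => i _; rewrite mxE expr2. Qed.

Lemma sqnorm_orth n (U : 'M[R]_n) (v : 'cV[R]_n) :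
  U^T *m U = 1%:M -> sqnorm (U *m v) = sqnorm v.
Proof.
by move=> hU; rewrite !sqnormE trmx_mul -mulmxA (mulmxA U^T) hU mul1mx.
Qed.

Lemma ventry_ord n (v : 'cV[R]_n) (i : 'I_n) : ventry v i = v i 0.
Proof. by rewrite /ventry valK. Qed.

Lemma ventry_out n (v : 'cV[R]_n) k : (n <= k)%N -> ventry v k = 0.
Proof. by move=> h; rewrite /ventry insubF // ltnNge h. Qed.

Lemma ventry_col n (F : 'I_n -> R) (G : nat -> R) :
  (forall i : 'I_n, F i = G i) -> G n = G n ->
  forall k, (k < n)%N -> ventry (\col_i F i) k = G k.
Proof.
move=> FG _ k kn; by rewrite /ventry insubT /= mxE FG.
Qed.

Lemma Sigma_mul M N (lam : nat -> R) r (x : 'cV[R]_N) (i : 'I_M) :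
  (r <= N)%N ->
  (svd_Sigma M N lam r *m x) i 0 = if (i < r)%N then lam i * ventry x i else 0.
Proof.
move=> rN; rewrite mxE; case: ifP => ir.
  have iN : (i < N)%N by apply: leq_trans rN.
  rewrite (bigD1 (Ordinal iN)) //= big1 ?addr0.
    by rewrite mxE eqxx ir /ventry insubT /=.
  move=> k kne; rewrite mxE; case: ifP; last by rewrite mul0r.
  move=> /andP[/eqP ik _]; exfalso; move/eqP: kne; apply; apply: val_inj => /=.
  by rewrite ik.
by rewrite big1 // => k _; rewrite mxE ir andbF mul0r.
Qed.

Lemma sqnorm_split M N (lam : nat -> R) r (yt : 'cV[R]_M) (xt : 'cV[R]_N) :
  (r <= M)%N -> (r <= N)%N ->
  sqnorm (yt - svd_Sigma M N lam r *m xt) =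
  \sum_(j < r) (ventry yt j - lam j * ventry xt j) ^+ 2
  + \sum_(i < M | (r <= i)%N) yt i 0 ^+ 2.
Proof.
move=> rM rN; rewrite /sqnorm (bigID (fun i : 'I_M => (i < r)%N)) /=.
congr (_ + _).
  rewrite (big_ord_widen M (fun j => (ventry yt j - lam j * ventry xt j) ^+ 2)) //.
  apply: eq_bigr => i ir; have E := Sigma_mul M N lam r xt i rN.
  by rewrite mxE [X in _ + X]mxE E ir ventry_ord.
rewrite (eq_bigl (fun i : 'I_M => (r <= i)%N)); last by move=> i; rewrite -leqNgt.
apply: eq_bigr => i ri; have E := Sigma_mul M N lam r xt i rN.
by rewrite mxE [X in _ + X]mxE E ltnNge ri /= subr0.
Qed.

End Aux.

Section Aux.
Variable R : realType.

Definition sgn (Y : R) : R := if Y < 0 then -1 else 1.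

Lemma sgnM (Y : R) : Y * sgn Y = `|Y|.
Proof. rewrite /sgn; case: ifP => h; first by rewrite ltr0_norm // mulrN1. 
by rewrite ger0_norm ?mulr1 // leNgt h. Qed.

Lemma sgn_sqr (Y : R) : sgn Y ^+ 2 = 1.
Proof. by rewrite /sgn; case: ifP; rewrite ?sqrrN expr1n. Qed.

Lemma L1 (Y X l z : R) : 0 <= l -> 0 < z ->
  (1/2) * (Y ^+ 2 * z + l ^+ 2 * (X ^+ 2 * z) - 2 * `|Y| * l * Num.sqrt (X ^+ 2 * z * z))
  <= (Y - l * X) ^+ 2 * (z / 2).
Proof.
move=> l0 z0.
have -> : X ^+ 2 * z * z = (`|X| * z) ^+ 2 by rewrite exprMn real_normK ?num_real //; ring.
have p : 0 <= `|X| * z by apply: mulr_ge0 => //; apply: ltW.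
rewrite sqrtr_sqr (ger0_norm p).
have h : Y * X <= `|Y| * `|X|.
  by rewrite -normrM; apply: ler_norm.
have h2 : 0 <= l * z by apply: mulr_ge0 => //; apply: ltW.
have := ler_wpM2r h2 h.
have -> : (Y - l * X) ^+ 2 * (z / 2) = (1/2) * (Y ^+ 2 * z + l ^+ 2 * (X ^+ 2 * z) - 2 * (Y * X) * (l * z)) by ring.
have -> : 2 * `|Y| * l * (`|X| * z) = 2 * (`|Y| * `|X|) * (l * z) by ring.
lra.
Qed.

Lemma sqrt_div_mul {w z : R} : 0 <= w -> 0 < z -> Num.sqrt (w / z) * z = Num.sqrt (w * z).
Proof.
move=> w0 z0.
have -> : w * z = (w / z) * z ^+ 2 by rewrite expr2 mulrA divfK // gt_eqF.
have wz : 0 <= w / z by rewrite divr_ge0 // ltW.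
by rewrite (sqrtrM (z ^+ 2) wz) sqrtr_sqr (ger0_norm (ltW z0)).
Qed.

Lemma L2 (Y w l z : R) : 0 <= w -> 0 < z ->
  (Y - l * (sgn Y * Num.sqrt (w / z))) ^+ 2 * (z / 2) =
  (1/2) * (Y ^+ 2 * z + l ^+ 2 * w - 2 * `|Y| * l * Num.sqrt (w * z)).
Proof.
move=> w0 z0.
have wz : 0 <= w / z by rewrite divr_ge0 // ltW.
have e1 := sqr_sqrtr wz. have e2 := sgn_sqr Y. have e3 := sgnM Y.
have e4 := sqrt_div_mul w0 z0.
have e5 : w / z * z = w by rewrite divfK // gt_eqF.
rewrite -e4 -e3.
set s := sgn Y; set q := Num.sqrt (w / z).
have -> : (Y - l * (s * q)) ^+ 2 * (z / 2) =
  (1/2) * (Y ^+ 2 * z + l ^+ 2 * (s ^+ 2 * q ^+ 2 * z) - 2 * (Y * s) * l * (q * z)) by ring.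
by rewrite e2 e1 (mul1r (w / z)) e5.
Qed.

End Aux.
Arguments sgn {R}.

Section Part2.
Variable R : realType.
Variables (M N : nat) (y : 'cV[R]_M) (H : 'M[R]_(M, N)) (se2 sn2 : R)
  (U : 'M[R]_M) (V : 'M[R]_N) (lam : nat -> R) (r : nat).
Hypotheses (hU : U^T *m U = 1%:M) (hV : V^T *m V = 1%:M)
  (hH : H = U *m svd_Sigma M N lam r *m V^T) (rM : (r <= M)%N) (rN : (r <= N)%N)
  (hse : 0 < se2) (hsn : 0 < sn2) (hlam : forall j, (j < r)%N -> 0 < lam j).

Let yt := U^T *m y.
Let c := \sum_(i < M | (r <= i)%N) yt i 0 ^+ 2.

Lemma sqnorm_ge0 n (v : 'cV[R]_n) : 0 <= sqnorm v.
Proof. by apply: sumr_ge0 => i _; apply: sqr_ge0. Qed.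

Lemma nll_eq x : nll y H se2 sn2 x =
  (\sum_(j < r) (ventry yt j - lam j * ventry (V^T *m x) j) ^+ 2 + c)
    / (2 * (se2 * sqnorm (V^T *m x) + sn2))
  + M%:R / 2 * ln (se2 * sqnorm (V^T *m x) + sn2).
Proof.
have hUt : U *m U^T = 1%:M := mulmx1C hU.
have hVt : V *m V^T = 1%:M := mulmx1C hV.
have ex : y - H *m x = U *m (yt - svd_Sigma M N lam r *m (V^T *m x)).
  by rewrite mulmxBr /yt (mulmxA U U^T y) hUt mul1mx hH -!mulmxA.
have ex2 : sqnorm x = sqnorm (V^T *m x).
  by rewrite -{1}(mul1mx x) -hVt -mulmxA sqnorm_orth.
by rewrite /nll ex sqnorm_orth // sqnorm_split // ex2.
Qed.

Lemma dirA x : exists (w : 'cV[R]_N) (z : R), feasP se2 sn2 w z /\ Phi yt lam r w z <= nll y H se2 sn2 x.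
Proof.
set xt := V^T *m x; set S := se2 * sqnorm xt + sn2.
have S0 : 0 < S by rewrite /S; apply: ltr_pwDr => //; apply: mulr_ge0; [apply: ltW|apply: sqnorm_ge0].
set z := S^-1.
have z0 : 0 < z by rewrite /z invr_gt0.
pose w : 'cV[R]_N := \col_k (xt k 0 ^+ 2 * z).
have vw : forall j, ventry w j = ventry xt j ^+ 2 * z.
  move=> j; rewrite /ventry; case: insubP => [k _ _|_]; first by rewrite mxE.
  by rewrite expr0n mul0r.
exists w, z; split.
  split; first by split => // i; rewrite mxE; apply: mulr_ge0; [apply: sqr_ge0|apply: ltW].
  have -> : \sum_(i < N) w i 0 = sqnorm xt * z.
    by rewrite /sqnorm mulr_suml; apply: eq_bigr => i _; rewrite mxE.
  have -> : se2 * (sqnorm xt * z) + sn2 * z = S * z by rewrite /S; ring.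
  by rewrite /z mulfV // gt_eqF.
rewrite nll_eq -/xt -/S /Phi -/c.
have hsum : \sum_(j < r) (1/2) * (ventry yt j ^+ 2 * z + lam j ^+ 2 * ventry w j
        - 2 * `|ventry yt j| * lam j * Num.sqrt (ventry w j * z))
   <= \sum_(j < r) (ventry yt j - lam j * ventry xt j) ^+ 2 * (z / 2).
  apply: ler_sum => j _; rewrite vw; apply: L1 => //; apply: ltW; apply: hlam.
  exact: ltn_ord.
rewrite -mulr_suml in hsum.
have e1 : (2 * S)^-1 = z / 2 by rewrite invfM mulrC.
have e2 : ln z = - ln S by rewrite /z lnV // posrE.
rewrite e2 e1.
set A := \sum_(j < r) _ in hsum *.
set B := \sum_(j < r) _ in hsum *.
have : (B + c) * (z / 2) = B * (z / 2) + 1/2 * c * z by ring.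
lra.
Qed.

Lemma dirB (w : 'cV[R]_N) (z : R) : feasP se2 sn2 w z -> exists x, nll y H se2 sn2 x <= Phi yt lam r w z.
Proof.
move=> [[hw hz] hcon].
pose xt : 'cV[R]_N := \col_k (sgn (ventry yt k) * Num.sqrt (w k 0 / z)).
have vx : forall j, ventry xt j = sgn (ventry yt j) * Num.sqrt (ventry w j / z).
  move=> j; case: (ltnP j N) => jN.
    by rewrite -[j]/(val (Ordinal jN)) !ventry_ord mxE.
  by rewrite (@ventry_out _ _ xt _ jN) (@ventry_out _ _ w _ jN) mul0r sqrtr0 mulr0.
have vw : forall j, 0 <= ventry w j.
  by move=> j; rewrite /ventry; case: insubP => [k _ _|_].
exists (V *m xt).
rewrite nll_eq.
have -> : V^T *m (V *m xt) = xt by rewrite mulmxA hV mul1mx.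
have sx : sqnorm xt = (\sum_(i < N) w i 0) / z.
  rewrite /sqnorm mulr_suml; apply: eq_bigr => i _; rewrite mxE exprMn sgn_sqr mul1r.
  by rewrite sqr_sqrtr // divr_ge0 // ltW.
have eS : se2 * sqnorm xt + sn2 = z^-1.
  have -> : z^-1 = (se2 * (\sum_(i < N) w i 0) + sn2 * z) / z by rewrite hcon mul1r.
  rewrite sx; field; exact: (negbT (gt_eqF hz)).
rewrite eS lnV ?posrE // /Phi -/c.
have e1 : (2 * z^-1)^-1 = z / 2 by rewrite invfM invrK mulrC.
rewrite e1.
have hB : \sum_(i < r) (ventry yt i - lam i * ventry xt i) ^+ 2 * (z / 2) =
  \sum_(j < r) (1/2) * (ventry yt j ^+ 2 * z + lam j ^+ 2 * ventry w j
        - 2 * `|ventry yt j| * lam j * Num.sqrt (ventry w j * z)).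
  by apply: eq_bigr => j _; rewrite vx L2.
rewrite -mulr_suml in hB.
rewrite -hB.
set B := \sum_(j < r) _.
have : (B + c) * (z / 2) = B * (z / 2) + 1/2 * c * z by ring.
lra.
Qed.

Lemma part2 :
  ereal_inf [set (nll y H se2 sn2 x)%:E | x in [set: 'cV[R]_N]]
     = ereal_inf [set e | exists (w : 'cV[R]_N) (z : R),
                     feasP se2 sn2 w z /\ e = (Phi yt lam r w z)%:E].
Proof.
apply/eqP; rewrite eq_le; apply/andP; split.
  apply: le_ereal_inf_tmp => e [w [z [hf ->]]].
  have [x hx] := dirB w z hf.
  apply: ge_ereal_inf; exists (nll y H se2 sn2 x)%:E; first by exists x.
  by rewrite lee_fin.
apply: le_ereal_inf_tmp => e [x _ <-].
have [w [z [hf hx]]] := dirA x.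
apply: ge_ereal_inf; exists (Phi yt lam r w z)%:E; first by exists w, z.
by rewrite lee_fin.
Qed.

End Part2.

Section Part13.
Variable R : realType.
Variables (M N : nat) (yt : 'cV[R]_M) (se2 sn2 : R) (lam : nat -> R) (r : nat).
Hypotheses (hse : 0 < se2) (hsn : 0 < sn2) (hlam : forall j, (j < r)%N -> 0 < lam j).

Let c := \sum_(i < M | (r <= i)%N) yt i 0 ^+ 2.

Lemma ventry_comb (w1 w2 : 'cV[R]_N) t j :
  ventry (t *: w1 + (1 - t) *: w2) j = t * ventry w1 j + (1 - t) * ventry w2 j.
Proof.
case: (ltnP j N) => jN.
  by rewrite -[j]/(val (Ordinal jN)) !ventry_ord !mxE.
by rewrite !(@ventry_out _ _ _ _ jN) !mulr0 addr0.
Qed.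

Lemma ventry_ge0 (w : 'cV[R]_N) j : (forall i, 0 <= w i 0) -> 0 <= ventry w j.
Proof. by move=> h; rewrite /ventry; case: insubP => [k _ _|_]. Qed.

Lemma Phi_convex (w1 w2 : 'cV[R]_N) (z1 z2 t : R) :
  domP w1 z1 -> domP w2 z2 -> 0 <= t <= 1 ->
  Phi yt lam r (t *: w1 + (1 - t) *: w2) (t * z1 + (1 - t) * z2)
    <= t * Phi yt lam r w1 z1 + (1 - t) * Phi yt lam r w2 z2.
Proof.
move=> [hw1 hz1] [hw2 hz2] ht; have /andP[t0 t1] := ht.
have t1' : 0 <= 1 - t by rewrite subr_ge0.
rewrite /Phi -/c.
set T := fun (w z : R) (j : nat) => (1/2) * (ventry yt j ^+ 2 * z + lam j ^+ 2 * w
        - 2 * `|ventry yt j| * lam j * Num.sqrt (w * z)).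
have hsum : \sum_(j < r) T (ventry (t *: w1 + (1 - t) *: w2) j) (t * z1 + (1 - t) * z2) j
   <= t * \sum_(j < r) T (ventry w1 j) z1 j + (1 - t) * \sum_(j < r) T (ventry w2 j) z2 j.
  rewrite !mulr_sumr -big_split /=; apply: ler_sum => j _.
  rewrite ventry_comb /T.
  have hl : 0 <= 2 * `|ventry yt j| * lam j.
    by apply: mulr_ge0; [apply: mulr_ge0 => //; apply: normr_ge0|apply: ltW; apply: hlam].
  have := @sqrt_concave _ _ _ _ _ t (ventry_ge0 w1 j hw1) (ventry_ge0 w2 j hw2) (ltW hz1) (ltW hz2) ht.
  move=> /(ler_wpM2l hl) h.
  set s := Num.sqrt _ in h *.
  set s1 := Num.sqrt (ventry w1 j * z1) in h *.
  set s2 := Num.sqrt (ventry w2 j * z2) in h *.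
  set K := 2 * `|ventry yt j| * lam j in h hl *.
  nra.
rewrite /T /= in hsum.
have hln := @ln_concave _ _ _ t hz1 hz2 ht.
have hM : 0 <= M%:R / 2 :> R by apply: divr_ge0.
have := ler_wpM2l hM hln.
set A := \sum_(j < r) _ in hsum *.
set A1 := \sum_(j < r) _ in hsum *.
set A2 := \sum_(j < r) _ in hsum *.
set K := M%:R / 2 in hM *.
nra.
Qed.

End Part13.

Section Part3.
Variable R : realType.
Variables (M N : nat) (yt : 'cV[R]_M) (se2 sn2 : R) (lam : nat -> R) (r : nat).
Hypotheses (hse : 0 < se2) (hsn : 0 < sn2) (hlam : forall j, (j < r)%N -> 0 < lam j).

Let c := \sum_(i < M | (r <= i)%N) yt i 0 ^+ 2.

Lemma Qnonneg (Y w l z : R) : 0 <= w -> 0 <= z ->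
  0 <= (1/2) * (Y ^+ 2 * z + l ^+ 2 * w - 2 * `|Y| * l * Num.sqrt (w * z)).
Proof.
move=> w0 z0; rewrite sqrtrM //.
have ew := sqr_sqrtr w0; have ez := sqr_sqrtr z0.
have ey := real_normK (num_real Y).
set a := Num.sqrt w in ew *; set b := Num.sqrt z in ez *.
rewrite -ew -ez -ey.
set y := `|Y|.
have -> : 1 / 2 * (y ^+ 2 * b ^+ 2 + l ^+ 2 * a ^+ 2 - 2 * y * l * (a * b)) = (1/2) * (y * b - l * a) ^+ 2 by ring.
by apply: mulr_ge0; [apply: divr_ge0|apply: sqr_ge0].
Qed.

Let g (w : 'cV[R]_N) (z : R) := se2 * (\sum_(i < N) w i 0) + sn2 * z.

Lemma Phi_lb (w : 'cV[R]_N) z : feasP se2 sn2 w z ->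
  - (M%:R / 2) * ln (sn2^-1) <= Phi yt lam r w z.
Proof.
move=> [[hw hz] hcon]; rewrite /Phi -/c.
have h1 : 0 <= \sum_(j < r) (1/2) * (ventry yt j ^+ 2 * z + lam j ^+ 2 * ventry w j
        - 2 * `|ventry yt j| * lam j * Num.sqrt (ventry w j * z)).
  by apply: sumr_ge0 => j _; apply: Qnonneg; [apply: ventry_ge0|apply: ltW].
have h2 : 0 <= 1/2 * c * z.
  apply: mulr_ge0; last exact: ltW.
  by apply: mulr_ge0; [apply: divr_ge0|apply: sumr_ge0 => i _; apply: sqr_ge0].
have hs : 0 <= \sum_(i < N) w i 0 by apply: sumr_ge0.
have zle : z <= sn2^-1.
  rewrite -(ler_pM2l hsn) mulfV ?gt_eqF //.
  have : 0 <= se2 * \sum_(i < N) w i 0 by apply: mulr_ge0 => //; apply: ltW.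
  lra.
have hln : ln z <= ln (sn2^-1) by rewrite ler_ln ?posrE ?invr_gt0.
have hM : 0 <= M%:R / 2 :> R by apply: divr_ge0.
have := ler_wpM2l hM hln.
set A := \sum_(j < r) _ in h1 *.
lra.
Qed.

Lemma part3 :
  ereal_inf [set e | exists (w : 'cV[R]_N) (z : R),
                     feasP se2 sn2 w z /\ e = (Phi yt lam r w z)%:E]
     = ereal_sup [set e | exists (nu : R) (mu : 'cV[R]_N),
                     (forall i, 0 <= mu i 0) /\
                     e = dualfun yt lam r se2 sn2 nu mu].
Proof.
set PS := [set e | exists (w : 'cV[R]_N) (z : R), feasP se2 sn2 w z /\ e = (Phi yt lam r w z)%:E].
have sum0 : \sum_(i < N) (0 : 'cV[R]_N) i 0 = 0 by apply: big1 => i _; rewrite mxE.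
have f0 : feasP se2 sn2 (0 : 'cV[R]_N) (sn2^-1).
  split; first by split; [move=> i; rewrite mxE|rewrite invr_gt0].
  by rewrite sum0 mulr0 add0r mulfV // gt_eqF.
have lb : ((- (M%:R / 2) * ln (sn2^-1))%:E <= ereal_inf PS)%E.
  apply: le_ereal_inf_tmp => e [w [z [hf ->]]]; rewrite lee_fin; exact: Phi_lb.
have ub : (ereal_inf PS <= (Phi yt lam r (0 : 'cV[R]_N) (sn2^-1))%:E)%E.
  by apply: ge_ereal_inf; exists (Phi yt lam r (0 : 'cV[R]_N) (sn2^-1))%:E => //; exists 0, (sn2^-1).
have fin : ereal_inf PS \is a fin_num.
  by rewrite fin_numE; apply/andP; split;
    [rewrite gt_eqF // (lt_le_trans _ lb) // ltNyr|rewrite lt_eqF // (le_lt_trans ub) // ltry].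
set p := fine (ereal_inf PS).
have pE : ereal_inf PS = p%:E by rewrite /p fineK.
have pl : forall (w : 'cV[R]_N) (z : R), feasP se2 sn2 w z -> p <= Phi yt lam r w z.
  move=> w z hf; rewrite -lee_fin -pE; apply: ge_ereal_inf; exists (Phi yt lam r w z)%:E => //; by exists w, z.
have [nu hnu] : exists nu, forall P : 'cV[R]_N * R, domP P.1 P.2 ->
    p <= Phi yt lam r P.1 P.2 + nu * (g P.1 P.2 - 1).
  apply: (@slope_lemma R _ (fun P => domP P.1 P.2) (fun P => Phi yt lam r P.1 P.2) (fun P => g P.1 P.2)).
  - move=> [w1 z1] [w2 z2] t /= d1 d2 ht.
    have /andP[t0 t1] := ht.
    exists (t *: w1 + (1 - t) *: w2, t * z1 + (1 - t) * z2) => /=.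
    case: d1 => hw1 hz1; case: d2 => hw2 hz2.
    split; [split|split].
    + move=> i; rewrite !mxE; apply: addr_ge0; apply: mulr_ge0 => //; rewrite subr_ge0 //.
    + nra.
    + rewrite /g.
      have -> : \sum_(i < N) (t *: w1 + (1 - t) *: w2) i 0 =
         t * \sum_(i < N) w1 i 0 + (1 - t) * \sum_(i < N) w2 i 0.
        by rewrite !mulr_sumr -big_split; apply: eq_bigr => i _; rewrite !mxE.
      ring.
    + by apply: Phi_convex.
  - by move=> [w z] /= hd hg; apply: pl; split.
  - exists (0, (2 * sn2)^-1); split; first by split; [move=> i; rewrite mxE|rewrite invr_gt0 mulr_gt0].
    rewrite /g /= sum0 mulr0 add0r invfM mulrCA mulfV ?gt_eqF // mulr1.
    by rewrite invf_lt1 // ltr1n.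
  - exists (0, 2 * sn2^-1); split; first by split; [move=> i; rewrite mxE|rewrite mulr_gt0 // invr_gt0].
    by rewrite /g /= sum0 mulr0 add0r mulrCA mulfV ?gt_eqF // mulr1 ltr1n.
apply/eqP; rewrite eq_le; apply/andP; split.
  apply: le_ereal_sup_tmp; exists (dualfun yt lam r se2 sn2 nu (0 : 'cV[R]_N)).
    by exists nu, 0; split => // i; rewrite mxE.
  rewrite pE; apply: le_ereal_inf_tmp => e [w [z [hd ->]]]; rewrite lee_fin /Lagr.
  have -> : \sum_(i < N) (0 : 'cV[R]_N) i 0 * w i 0 = 0 by apply: big1 => i _; rewrite mxE mul0r.
  by rewrite subr0; apply: (hnu (w, z)).
apply: ge_ereal_sup => e [nu' [mu [hmu ->]]].
apply: le_ereal_inf_tmp => e' [w [z [hf ->]]].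
apply: ge_ereal_inf; exists (Lagr yt lam r se2 sn2 w z nu' mu)%:E.
  by exists w, z; split => //; case: hf.
rewrite lee_fin /Lagr.
case: hf => [[hw hz] hcon].
rewrite hcon subrr mulr0 addr0 lerBlDr lerDl.
by apply: sumr_ge0 => i _; apply: mulr_ge0.
Qed.

End Part3.

Theorem mainTheorem3 (R : realType) (M N : nat)
  (y : 'cV[R]_M) (H : 'M[R]_(M, N)) (se2 sn2 : R)
  (U : 'M[R]_M) (V : 'M[R]_N) (lam : nat -> R) :
  (0 < M)%N -> (0 < N)%N -> (1 <= \rank H)%N ->
  0 < se2 -> 0 < sn2 ->
  (* singular value decomposition H = U Sigma V^T *)
  U^T *m U = 1%:M -> V^T *m V = 1%:M ->
  (forall j k, (j <= k)%N -> (k < \rank H)%N -> lam k <= lam j) ->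
  (forall j, (j < \rank H)%N -> 0 < lam j) ->
  H = U *m svd_Sigma M N lam (\rank H) *m V^T ->
  let r := \rank H in
  let ytil := U^T *m y in
  (* (i) convexity of Phi on {w >= 0, z > 0} *)
  (forall (w1 w2 : 'cV[R]_N) (z1 z2 t : R),
     domP w1 z1 -> domP w2 z2 -> 0 <= t <= 1 ->
     Phi ytil lam r (t *: w1 + (1 - t) *: w2) (t * z1 + (1 - t) * z2)
       <= t * Phi ytil lam r w1 z1 + (1 - t) * Phi ytil lam r w2 z2)
  (* (ii) inf f = optimal value of (P) *)
  /\ ereal_inf [set (nll y H se2 sn2 x)%:E | x in [set: 'cV[R]_N]]
     = ereal_inf [set e | exists (w : 'cV[R]_N) (z : R),
                     feasP se2 sn2 w z /\ e = (Phi ytil lam r w z)%:E]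
  (* (iii) strong duality *)
  /\ ereal_inf [set e | exists (w : 'cV[R]_N) (z : R),
                     feasP se2 sn2 w z /\ e = (Phi ytil lam r w z)%:E]
     = ereal_sup [set e | exists (nu : R) (mu : 'cV[R]_N),
                     (forall i, 0 <= mu i 0) /\
                     e = dualfun ytil lam r se2 sn2 nu mu].
Proof.
move=> M0 N0 r1 hse hsn hU hV hmono hlam hH r ytil.
have rM : (r <= M)%N by apply: rank_leq_row.
have rN : (r <= N)%N by apply: rank_leq_col.
split.
  move=> w1 w2 z1 z2 t d1 d2 ht.
  exact: (@Phi_convex R M N ytil lam r hlam w1 w2 z1 z2 t d1 d2 ht).
split.
  exact: (@part2 R M N y H se2 sn2 U V lam r hU hV hH rM rN hse hsn hlam).
exact: (@part3 R M N ytil se2 sn2 lam r hse hsn hlam).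
Qed.
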